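(* Let $f(x)=\frac{1}{\sqrt{2\pi}}\ln(1+x)$ for $x\ge0$, let $d>0$, let $u(x)=\frac1d(e+x)\big(\ln(e+x)\big)^2$, and let $g(x)=u(f(x))-f(x)$. Then: 1. If $0<d\le1$, then $g\ge f$ and $g$ is increasing on $[0,\infty)$. 2. $\int_0^\infty\frac{f'(x)}{f(x)+g(x)}\,dx=d$. *)

(* Defs.v *)
From Stdlib Require Import Reals.
From Coquelicot Require Import Coquelicot.
Open Scope R_scope.

Definition f_ln (x : R) : R := / sqrt (2 * PI) * ln (1 + x).

Definition u_fn (d x : R) : R := / d * (exp 1 + x) * (ln (exp 1 + x)) ^ 2.

Definition g_fn (d x : R) : R := u_fn d (f_ln x) - f_ln x.

(* Main.v *)
Require Import Defs.
From Stdlib Require Import Reals.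
From Coquelicot Require Import Coquelicot.
Open Scope R_scope.
From Stdlib Require Import Lra.

Definition cc := / sqrt (2 * PI).

Lemma cc_bounds : 0 < cc < 1.
Proof.
  unfold cc.
  assert (H1 : 1 < sqrt (2 * PI)).
  { rewrite <- sqrt_1. apply sqrt_lt_1_alt. pose proof PI_RGT_0. pose proof PI_4. split; [lra|].
    pose proof (PI2_3_2). lra. }
  split. apply Rinv_0_lt_compat; lra.
  assert (/ sqrt (2*PI) * sqrt (2*PI) = 1) by (field; lra).
  assert (0 < / sqrt (2*PI)) by (apply Rinv_0_lt_compat; lra). nra.
Qed.

Lemma e_bounds : 2 < exp 1 <= 3.
Proof. split. pose proof (exp_ineq1 1 ltac:(lra)). lra. apply exp_le_3. Qed.

Lemma ln2_half : 1/2 < ln 2.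
Proof.
  rewrite <- (ln_exp (1/2)). apply ln_increasing. apply exp_pos.
  assert (exp (1/2) * exp (1/2) = exp 1) by (rewrite <- exp_plus; f_equal; lra).
  pose proof e_bounds. pose proof (exp_pos (1/2)). nra.
Qed.

Lemma f_nonneg x : 0 <= x -> 0 <= f_ln x.
Proof.
  intros. unfold f_ln. fold cc. pose proof cc_bounds.
  assert (0 <= ln (1 + x)). { rewrite <- ln_1. apply ln_le; lra. }
  nra.
Qed.

Lemma f_lt x y : 0 <= x -> x < y -> f_ln x < f_ln y.
Proof.
  intros. unfold f_ln. fold cc. pose proof cc_bounds.
  assert (ln (1 + x) < ln (1+y)). { apply ln_increasing; lra. }
  nra.
Qed.

Lemma L_ge1 t : 0 <= t -> 1 <= ln (exp 1 + t).
Proof.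
  intros. rewrite <- (ln_exp 1) at 1. apply ln_le. apply exp_pos. lra.
Qed.

Lemma part1a d x : 0 < d -> d <= 1 -> 0 <= x -> f_ln x <= g_fn d x.
Proof.
  intros hd hd1 hx. unfold g_fn, u_fn. pose proof (f_nonneg x hx).
  set (t := f_ln x) in *. pose proof (L_ge1 t H). set (L := ln (exp 1 + t)) in *.
  pose proof e_bounds.
  assert (hid : 1 <= / d). { rewrite <- Rinv_1. apply Rinv_le_contravar; lra. }
  assert (key : 2 * t <= (exp 1 + t) * L ^ 2).
  { destruct (Rle_lt_dec t (exp 1)).
    - assert (1 <= L^2) by nra. nra.
    - assert (3/2 <= L).
      { unfold L.
        pose proof ln2_half.
        assert (ln 2 + 1 <= ln (exp 1 + t)).
        { assert (E: ln (2 * exp 1) = ln 2 + 1) by (rewrite ln_mult; try lra; rewrite ln_exp; lra).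
          rewrite <- E. apply ln_le; lra. }
        lra. }
      assert (9/4 <= L^2) by nra.
      assert ((exp 1 + t) * (9/4) <= (exp 1 + t) * L^2) by (apply Rmult_le_compat_l; lra).
      lra. }
  assert (0 <= (exp 1 + t) * L ^ 2) by nra.
  nra.
Qed.

Lemma part1b d x y : 0 < d -> d <= 1 -> 0 <= x -> x < y -> g_fn d x < g_fn d y.
Proof.
  intros hd hd1 hx hxy. unfold g_fn, u_fn.
  pose proof (f_nonneg x hx). pose proof (f_lt x y hx hxy).
  set (s := f_ln x) in *. set (t := f_ln y) in *.
  pose proof (L_ge1 s H).
  assert (Hl : ln (exp 1 + s) < ln (exp 1 + t)).
  { apply ln_increasing; pose proof e_bounds; lra. }
  set (Ls := ln (exp 1 + s)) in *. set (Lt := ln (exp 1 + t)) in *.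
  pose proof e_bounds.
  assert (hid : 1 <= / d). { rewrite <- Rinv_1. apply Rinv_le_contravar; lra. }
  assert (A : t - s < (exp 1 + t) * Lt ^ 2 - (exp 1 + s) * Ls ^ 2).
  { assert (Ls^2 < Lt^2) by nra.
    assert ((exp 1 + t) * Ls^2 < (exp 1 + t) * Lt^2) by nra.
    assert (1 <= Ls^2) by nra.
    assert ((t - s) * 1 <= (t - s) * Ls^2) by (apply Rmult_le_compat_l; lra).
    nra. }
  nra.
Qed.

Lemma near_pos y : -1/2 < y -> 0 < 1 + y /\ 1 < exp 1 + cc * ln (1 + y).
Proof.
  intros. split. lra.
  pose proof cc_bounds. pose proof e_bounds.
  assert (-1 < ln (1 + y)).
  { rewrite <- (ln_exp (-1)). apply ln_increasing. apply exp_pos.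
    replace (exp (-1)) with (/ exp 1) by (rewrite <- exp_Ropp; f_equal; lra). assert (/ exp 1 < /2) by (apply Rinv_lt_contravar; lra). lra. }
  nra.
Qed.

Lemma Dfl y : -1 < y -> Derive f_ln y = cc / (1 + y).
Proof.
  intros. apply is_derive_unique. unfold f_ln. fold cc.
  auto_derive. lra. field. lra.
Qed.

Definition FF d y := - d / ln (exp 1 + cc * ln (1 + y)).
Definition GG d y := d * cc / (1 + y) / ((exp 1 + cc * ln (1 + y)) * ln (exp 1 + cc * ln (1 + y)) ^ 2).

Lemma integrand_eq d y : 0 < d -> -1/2 < y ->
  Derive f_ln y / (f_ln y + g_fn d y) = GG d y.
Proof.
  intros hd hy. destruct (near_pos y hy) as [h1 h2].
  rewrite Dfl by lra.
  replace (f_ln y + g_fn d y) with (u_fn d (f_ln y)) by (unfold g_fn; ring).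
  unfold u_fn, GG, f_ln. fold cc.
  assert (0 < ln (exp 1 + cc * ln (1 + y))).
  { rewrite <- ln_1. apply ln_increasing; lra. }
  field. repeat split; try lra.
Qed.

Lemma DFF d y : 0 < d -> -1/2 < y -> is_derive (FF d) y (GG d y).
Proof.
  intros hd hy. destruct (near_pos y hy) as [h1 h2].
  assert (0 < ln (exp 1 + cc * ln (1 + y))).
  { rewrite <- ln_1. apply ln_increasing; lra. }
  unfold FF, GG. auto_derive.
  - repeat split; lra.
  - field. repeat split; lra.
Qed.

Lemma GG_cont d y : 0 < d -> -1/2 < y -> continuous (GG d) y.
Proof.
  intros hd hy. destruct (near_pos y hy) as [h1 h2].
  assert (0 < ln (exp 1 + cc * ln (1 + y))).
  { rewrite <- ln_1. apply ln_increasing; lra. }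
  apply (@ex_derive_continuous R_AbsRing R_NormedModule). unfold GG. auto_derive.
  repeat split; try lra. apply Rgt_not_eq. rewrite Rmult_1_r. repeat apply Rmult_lt_0_compat; lra.
Qed.

Lemma FF0 d : FF d 0 = - d.
Proof. unfold FF. rewrite Rplus_0_r, ln_1, Rmult_0_r, Rplus_0_r, ln_exp. field. Qed.

Lemma FF_lim d : 0 < d -> filterlim (FF d) (Rbar_locally p_infty) (locally 0).
Proof.
  intros hd P [eps HP]. pose proof cc_bounds. pose proof e_bounds.
  exists (exp (exp (d / eps) / cc)). intros y Hy. apply HP.
  pose proof (exp_pos (exp (d / eps) / cc)).
  assert (A : exp (d / eps) / cc < ln (1 + y)).
  { rewrite <- (ln_exp (exp (d / eps) / cc)). apply ln_increasing; lra. }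
  assert (B : exp (d / eps) < cc * ln (1 + y)).
  { apply Rlt_div_l in A; lra. }
  assert (C : d / eps < ln (exp 1 + cc * ln (1 + y))).
  { rewrite <- (ln_exp (d / eps)) at 1. apply ln_increasing. apply exp_pos. lra. }
  set (L := ln (exp 1 + cc * ln (1 + y))) in *.
  pose proof (cond_pos eps).
  assert (0 < d / eps) by (apply Rdiv_lt_0_compat; lra).
  assert (D : d < eps * L). { apply Rlt_div_l in C; lra. }
  change (Rabs (FF d y - 0) < eps). unfold FF. fold L.
  assert (d / L < eps) by (apply Rlt_div_l; lra).
  assert (0 < d / L) by (apply Rdiv_lt_0_compat; lra).
  apply Rabs_def1; unfold Rdiv in *; lra.
Qed.

Lemma part2 d : 0 < d ->
  is_RInt_gen (fun x => Derive f_ln x / (f_ln x + g_fn d x))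
              (at_point 0) (Rbar_locally p_infty) d.
Proof.
  intros hd.
  assert (Hfp : filter_prod (at_point 0) (Rbar_locally p_infty)
     (fun ab : R * R => fst ab = 0 /\ 0 < snd ab)).
  { apply (Filter_prod _ _ _ (fun x => x = 0) (fun y => 0 < y)).
    - reflexivity.
    - exists 0. auto.
    - simpl. auto. }
  apply (is_RInt_gen_ext (Derive (FF d))).
  { eapply filter_imp; [|exact Hfp]. intros [a b] [ha hb] x Hx; simpl in *. subst a.
    rewrite Rmin_left in Hx by lra. rewrite Rmax_right in Hx by lra.
    rewrite integrand_eq by lra. apply is_derive_unique. apply DFF; lra. }
  replace d with (0 - - d) at 2 by ring.
  apply is_RInt_gen_Derive.
  - eapply filter_imp; [|exact Hfp]. intros [a b] [ha hb] x Hx; simpl in *. subst a.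
    rewrite Rmin_left in Hx by lra. rewrite Rmax_right in Hx by lra.
    eexists. apply DFF; lra.
  - eapply filter_imp; [|exact Hfp]. intros [a b] [ha hb] x Hx; simpl in *. subst a.
    rewrite Rmin_left in Hx by lra. rewrite Rmax_right in Hx by lra.
    apply (continuous_ext_loc _ (GG d)).
    + assert (h2 : 0 < 1/2) by lra.
      exists (mkposreal _ h2). intros y Hy. change (Rabs (y - x) < 1/2) in Hy.
      apply Rabs_def2 in Hy.
      apply eq_sym, is_derive_unique. apply DFF; lra.
    + apply GG_cont; lra.
  - intros P HP. unfold filtermap, at_point. rewrite FF0. now apply locally_singleton.
  - now apply FF_lim.
Qed.

Theorem lemma7 (d : R) (hd : 0 < d) :
  (d <= 1 ->
     (forall x, 0 <= x -> f_ln x <= g_fn d x) /\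
     (forall x y, 0 <= x -> x < y -> g_fn d x < g_fn d y)) /\
  is_RInt_gen (fun x => Derive f_ln x / (f_ln x + g_fn d x))
              (at_point 0) (Rbar_locally p_infty) d.
Proof.
  split.
  - intros hd1. split.
    + intros x hx. now apply part1a.
    + intros x y hx hxy. now apply part1b.
  - now apply part2.
Qed.
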